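(* Let $t\geqslant 2$ be an integer, let $r\in\{2t,2t+1\}$, and let $n\geqslant 2r$. Then $$N(n,2r,r)=\begin{cases}\binom{2t}{t}, & \text{if } r=2t,\\[2pt] 2\binom{2t-2}{t-1}, & \text{if } r=2t+1.\end{cases}$$
   Context: $\mathrm{Sym}_n$ is the symmetric group of permutations of $[n]=\{1,\dots,n\}$, and $I_n$ is the identity permutation. The Hamming distance between $\pi,\tau\in\mathrm{Sym}_n$ is $d(\pi,\tau)=|\{i\in[n]:\pi(i)\neq\tau(i)\}|$. The ball of radius $r$ is $B_r(\pi)=\{\tau\in\mathrm{Sym}_n: d(\pi,\tau)\leqslant r\}$. For integers $d,r$ define $I(n,d,r)=\max_{\pi,\tau\in\mathrm{Sym}_n,\ d(\pi,\tau)=d}|B_r(\pi)\cap B_r(\tau)|$ (taken to be $0$ if the intersections are all empty) and $N(n,d,r)=\max_{\pi,\tau\in\mathrm{Sym}_n,\ d(\pi,\tau)\geqslant d}|B_r(\pi)\cap B_r(\tau)|=\max_{k\geqslant d}I(n,k,r)$. *)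

(* Defs.v *)
From mathcomp Require Import all_boot all_fingroup.
Set Implicit Arguments. Unset Strict Implicit. Unset Printing Implicit Defensive.

Definition hdist (n : nat) (p q : {perm 'I_n}) : nat := #|[set i | p i != q i]|.

Definition hball (n r : nat) (p : {perm 'I_n}) : {set {perm 'I_n}} :=
  [set s | hdist p s <= r].

Definition Ival (n d r : nat) : nat :=
  \max_(pq : {perm 'I_n} * {perm 'I_n} | hdist pq.1 pq.2 == d)
     #|hball r pq.1 :&: hball r pq.2|.

Definition Nval (n d r : nat) : nat :=
  \max_(pq : {perm 'I_n} * {perm 'I_n} | d <= hdist pq.1 pq.2)
     #|hball r pq.1 :&: hball r pq.2|.

(* Main.v *)
Require Import Defs.
From mathcomp Require Import all_boot all_fingroup zify.
Set Implicit Arguments. Unset Strict Implicit. Unset Printing Implicit Defensive.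


Fixpoint cnt (s : seq nat) (k : nat) : nat :=
  if s is l :: s' then cnt s' k + (if l <= k then cnt s' (k - l) else 0)
  else (k == 0 : nat).

Definition H b k s := if (s <= k) && ~~ odd (k - s) then 'C(b, (k - s)./2) else 0.
Definition F a b k := \sum_(j < a.+1) 'C(a, j) * H b k (3 * j).

Lemma H_S b k s : H b.+1 k s = H b k s + (if 2 <= k then H b (k - 2) s else 0).
Proof.
rewrite /H.
case: ifP => h1; last first.
  case: ifP => h2 //; rewrite ifF //; apply/negbTE; move/negbT: h1; lia.
have [hk|hk] := eqVneq s k.
  subst s; rewrite subnn /= bin0 bin0.
  by case: ifP => // h2; rewrite ifF ?addn0 //; apply/negbTE; lia.
have -> : 2 <= k by lia.
rewrite ifT; last by move: h1; lia.
have -> : (k - s)./2 = ((k - 2 - s)./2).+1 by lia.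
rewrite binS addnC; congr (_ + _); congr 'C(_, _); lia.
Qed.

Lemma H_sh3 b k j : H b k (3 * j.+1) = if 3 <= k then H b (k - 3) (3 * j) else 0.
Proof.
rewrite /H; case: ifP => h3.
  have -> : k - 3 * j.+1 = k - 3 - 3 * j by lia.
  rewrite ifT; last by move: h3; lia.
  by rewrite ifT //; move: h3; lia.
case: ifP => // h4; rewrite ifF //; apply/negbTE; move/negbT: h3; lia.
Qed.

Lemma F_S3 a b k : F a.+1 b k = F a b k + (if 3 <= k then F a b (k - 3) else 0).
Proof.
rewrite /F big_ord_recl /= bin0 mul1n.
under eq_bigr => i _ do rewrite binS mulnDl.
rewrite big_split /= big_ord_recr /= bin_small // mul0n addn0.
rewrite [in RHS]big_ord_recl /= bin0 mul1n -!addnA; congr (_ + _).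
congr (_ + _).
under eq_bigr => i _ do rewrite H_sh3.
case: ifP => h3 //.
by rewrite big1 // => i _; rewrite muln0.
Qed.

Lemma F_S2 a b k : F a b.+1 k = F a b k + (if 2 <= k then F a b (k - 2) else 0).
Proof.
rewrite /F; under eq_bigr => i _ do rewrite H_S mulnDr.
rewrite big_split /=; congr (_ + _).
case: ifP => // _; by rewrite big1 // => i _; rewrite muln0.
Qed.

Lemma cnt_F s k : all (fun x => (x == 2) || (x == 3)) s ->
  cnt s k = F (count_mem 3 s) (count_mem 2 s) k.
Proof.
elim: s k => [|l s IH] k /=.
  move=> _; rewrite /F big_ord_recl big_ord0 addn0 bin0 mul1n /H.
  rewrite subn0 leq0n /=; case: k => [|k] //=.
  by case: ifP => // h; rewrite bin_small //; move: h; lia.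
case/andP => /orP [] /eqP -> hs.
  by rewrite /= add0n add1n F_S2 !IH.
by rewrite /= add0n add1n F_S3 !IH.
Qed.

Lemma bin_up n k : 2 * k + 1 <= n -> 'C(n, k) <= 'C(n, k.+1).
Proof.
move=> h; rewrite -(@leq_pmul2l k.+1) // mul_bin_left.
by apply: leq_mul => //; lia.
Qed.

Lemma bin_mono b e y w : w <= e -> w <= y -> 'C(b, y - w) <= 'C(b + e, y).
Proof.
move=> we wy; apply: (@leq_trans 'C(b + w, y)); last by apply: leq_bin2l; lia.
elim: w y wy {we} => [|w IH] y wy; first by rewrite subn0 addn0.
case: y wy => [|y] wy //.
rewrite subSS addnS binS; apply: leq_trans (leq_addl _ _).
by apply: IH.
Qed.

Lemma sum_ext n d (f : nat -> nat) : (forall u, n <= u -> f u = 0) ->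
  \sum_(u < n + d) f u = \sum_(u < n) f u.
Proof.
move=> hf; elim: d => [|d IH]; first by rewrite addn0.
by rewrite addnS big_ord_recr /= IH hf ?addn0 // leq_addr.
Qed.

Lemma pascal_sum n (f : nat -> nat) :
  \sum_(j < n.+2) 'C(n.+1, j) * f j = \sum_(u < n.+1) 'C(n, u) * (f u + f u.+1).
Proof.
rewrite big_ord_recl /= bin0 mul1n.
under eq_bigr => i _ do rewrite binS mulnDl.
rewrite big_split /= big_ord_recr /= bin_small // mul0n addn0.
under [in RHS]eq_bigr => i _ do rewrite mulnDr.
rewrite big_split /= [in RHS]big_ord_recl /= bin0 mul1n -!addnA; congr (_ + _).
Qed.

Definition R b e x u := if u <= x then 'C(b + e, x - u) else 0.

Lemma PW e b x u : 3 * e + b = 2 * x -> u <= 2 * e ->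
  H b (2 * x) (3 * u) + H b (2 * x) (3 * u.+1) <= R b e x u.
Proof.
move=> hx hu; rewrite /H /R.
have [ou|eu] := boolP (odd u).
  rewrite [X in X + _]ifF; last by apply/negbTE; lia.
  rewrite add0n.
  case: ifP => // h1.
  have [g hg] : exists g, u = (2 * g).-1 /\ 1 <= g by exists (u.+1)./2; lia.
  case: hg => hg g1; subst u.
  rewrite ifT; last by lia.
  have -> : (2 * x - 3 * (2 * g).-1.+1)./2 = x - 3 * g by lia.
  have [ge|ge] := leqP (g + 1) e.
    have -> : x - 3 * g = (x - (2 * g).-1) - (g + 1) by lia.
    by apply: bin_mono; lia.
  have eg : g = e by lia.
  subst g.
  apply: (@leq_trans 'C(b, (x - 3 * e).+1)); first by apply: bin_up; lia.
  have -> : (x - 3 * e).+1 = (x - (2 * e).-1) - e by lia.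
  by apply: bin_mono; lia.
rewrite [X in _ + X]ifF; last by apply/negbTE; lia.
rewrite addn0.
case: ifP => // h1.
have [g hg] : exists g, u = 2 * g by exists u./2; lia.
subst u.
rewrite ifT; last by lia.
have -> : (2 * x - 3 * (2 * g))./2 = (x - 2 * g) - g by lia.
by apply: bin_mono; lia.
Qed.

Lemma Kp e b x : 3 * e + b = 2 * x -> F (2 * e).+1 b (2 * x) <= 'C(2 * x, x).
Proof.
move=> hx; rewrite /F (pascal_sum (2 * e) (fun j => H b (2 * x) (3 * j))) /=.
have -> : 2 * x = 2 * e + (b + e) by lia.
rewrite -Vandermonde.
have -> : 2 * e + (b + e) = 2 * x by lia.
pose N := (2 * e).+1 + x.+1.
have E1 : \sum_(u < (2 * e).+1) 'C(2 * e, u) * (H b (2 * x) (3 * u) + H b (2 * x) (3 * u.+1))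
   = \sum_(u < N) 'C(2 * e, u) * (H b (2 * x) (3 * u) + H b (2 * x) (3 * u.+1)).
  rewrite /N (@sum_ext _ _ (fun u => 'C(2 * e, u) * (H b (2 * x) (3 * u) + H b (2 * x) (3 * u.+1)))) //.
  by move=> u hu; rewrite bin_small ?mul0n.
have E2 : \sum_(u < x.+1) 'C(2 * e, u) * 'C(b + e, x - u)
   = \sum_(u < x.+1 + (2 * e).+1) 'C(2 * e, u) * R b e x u.
  rewrite (@sum_ext _ _ (fun u => 'C(2 * e, u) * R b e x u)); last by move=> u hu; rewrite /R leqNgt hu /= muln0.
  by apply: eq_bigr => u _; rewrite /R ifT //; rewrite -ltnS.
rewrite E1 E2 [x.+1 + _]addnC; apply: leq_sum => u _.
have [hu|hu] := leqP u (2 * e); last by rewrite bin_small.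
by rewrite leq_mul2l PW ?orbT.
Qed.

Lemma cnt_big s k : sumn s < k -> cnt s k = 0.
Proof.
elim: s k => [|l s IH] k /= h; first by case: k h.
rewrite IH; last by lia.
by case: ifP => // hl; rewrite IH //; lia.
Qed.

Lemma cnt_sym s k : k <= sumn s -> cnt s k = cnt s (sumn s - k).
Proof.
elim: s k => [|l s IH] k /= h; first by case: k h.
have [hk|hk] := leqP k (sumn s).
  rewrite (IH k hk).
  rewrite [in RHS]ifT; last by lia.
  have -> : l + sumn s - k - l = sumn s - k by lia.
  rewrite addnC; congr (_ + _).
  case: ifP => hl.
    rewrite IH; last by lia.
    by congr cnt; lia.
  by rewrite cnt_big //; lia.
rewrite cnt_big // add0n.
rewrite [in RHS]ifF; last by apply/negbTE; lia.
rewrite addn0; case: ifP => hl.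
  rewrite IH; last by lia.
  by congr cnt; lia.
by rewrite cnt_big //; lia.
Qed.

Lemma cnt_cat1 u s k : cnt s k <= cnt (u ++ s) k.
Proof.
elim: u k => [|x u IH] k //=.
by apply: leq_trans (IH k) (leq_addr _ _).
Qed.

Lemma cnt_cat2 u s k : sumn u <= k -> cnt s (k - sumn u) <= cnt (u ++ s) k.
Proof.
elim: u k => [|x u IH] k /=; first by rewrite subn0.
move=> h; rewrite ifT; last by lia.
apply: leq_trans (leq_addl _ _).
have -> : k - (x + sumn u) = (k - x) - sumn u by lia.
by apply: IH; lia.
Qed.

Lemma cnt_block x w s k :
  cnt s k + (if x + sumn w <= k then cnt s (k - (x + sumn w)) else 0) <= cnt (x :: w ++ s) k.
Proof.
rewrite /=; apply: leq_add; first exact: cnt_cat1.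
case: ifP => h; last by case: ifP.
rewrite ifT; last by lia.
have -> : k - (x + sumn w) = (k - x) - sumn w by lia.
by apply: cnt_cat2; lia.
Qed.

Definition block l := if odd l then 3 :: nseq (l - 3)./2 2 else 2 :: nseq (l./2).-1 2.

Fixpoint norm s := if s is l :: s' then block l ++ norm s' else [::].

Lemma block_sum l : 2 <= l -> sumn (block l) = l.
Proof. by rewrite /block; case: ifP => h /=; rewrite sumn_nseq; lia. Qed.

Lemma norm_all s : all (fun x => (x == 2) || (x == 3)) (norm s).
Proof.
elim: s => [|l s IH] //=; rewrite all_cat IH andbT /block.
by case: ifP => _ /=; rewrite all_nseq /= orbT.
Qed.

Lemma block_cons l : 2 <= l -> exists x w, block l = x :: w /\ x + sumn w = l.
Proof.
move=> hl; rewrite /block; case: ifP => h.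
  by exists 3, (nseq (l - 3)./2 2); split => //; rewrite sumn_nseq; lia.
by exists 2, (nseq (l./2).-1 2); split => //; rewrite sumn_nseq; lia.
Qed.

Lemma norm_sum s : all (leq 2) s -> sumn (norm s) = sumn s.
Proof.
elim: s => [|l s IH] //= /andP [hl hs].
by rewrite sumn_cat block_sum // IH.
Qed.

Lemma cnt_norm s k : all (leq 2) s -> cnt s k <= cnt (norm s) k.
Proof.
elim: s k => [|l s IH] k //= /andP [hl hs].
have [x [w [hb hx]]] := block_cons hl.
rewrite hb; apply: leq_trans (cnt_block x w (norm s) k).
rewrite hx; apply: leq_add; first exact: IH.
by case: ifP => // _; apply: IH.
Qed.

Lemma sum23 s : all (fun x => (x == 2) || (x == 3)) s ->
  sumn s = 3 * count_mem 3 s + 2 * count_mem 2 s.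
Proof.
elim: s => [|l s IH] //= /andP [/orP [] /eqP -> hs]; rewrite IH //=; lia.
Qed.

Lemma F0_odd b k : odd k -> F 0 b k = 0.
Proof.
move=> hk; rewrite /F big_ord_recl big_ord0 /H /= addn0 subn0.
by rewrite hk.
Qed.

Lemma F_sym a b k : k <= 3 * a + 2 * b -> F a b k = F a b (3 * a + 2 * b - k).
Proof.
move=> hk.
have hall : all (fun x => (x == 2) || (x == 3)) (nseq a 3 ++ nseq b 2).
  by rewrite all_cat !all_nseq /= !orbT.
have c3 : count_mem 3 (nseq a 3 ++ nseq b 2) = a.
  by rewrite count_cat !count_nseq /=; lia.
have c2 : count_mem 2 (nseq a 3 ++ nseq b 2) = b.
  by rewrite count_cat !count_nseq /=; lia.
have sm : sumn (nseq a 3 ++ nseq b 2) = 3 * a + 2 * b.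
  by rewrite sumn_cat !sumn_nseq.
have E := cnt_F k hall; rewrite c3 c2 in E.
rewrite -E cnt_sym; last by rewrite sm.
by rewrite cnt_F // c3 c2 sm.
Qed.

Lemma cnt_V ps r t : all (leq 2) ps -> sumn ps = 2 * r ->
  (r = 2 * t \/ r = 2 * t + 1) -> 1 <= t ->
  cnt ps r <= (if r == 2 * t then 'C(2 * t, t) else 2 * 'C(2 * t - 2, t - 1)).
Proof.
move=> h2 hs hr ht.
apply: leq_trans (cnt_norm r h2) _.
have hall := norm_all ps.
rewrite cnt_F //.
have := sum23 hall; rewrite norm_sum // hs.
set a := count_mem 3 _; set b := count_mem 2 _ => hab.
case: hr => hr; subst r.
  rewrite eqxx.
  apply: (@leq_trans (F a.+1 b (2 * t))); first by rewrite F_S3 leq_addr.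
  have [e he] : exists e, a = 2 * e by exists a./2; lia.
  rewrite he; apply: Kp; lia.
rewrite ifF; last by lia.
case: a hab => [|a'] hab; first by rewrite F0_odd //; lia.
rewrite F_S3 ifT; last by lia.
have [e he] : exists e, a' = (2 * e).+1 by exists a'./2; lia.
rewrite F_sym; last by lia.
have -> : 3 * a' + 2 * b - (2 * t + 1) = 2 * t + 1 - 3 by lia.
have -> : 2 * t + 1 - 3 = 2 * (t - 1) by lia.
have -> : 2 * t - 2 = 2 * (t - 1) by lia.
rewrite he [X in _ <= X]mul2n -addnn.
by apply: leq_add; apply: Kp; lia.
Qed.


Section Closed.
Variable T : finType.
Variable g : {perm T}.

Definition closed (A : {set T}) := [forall y in A, g y \in A].
Definition CS (D : {set T}) k :=
  [set A : {set T} | (A \subset D) && closed A && (#|A| == k)].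

Lemma closed_iter A y i : closed A -> y \in A -> (g ^+ i)%g y \in A.
Proof.
move=> /forall_inP cA yA; elim: i => [|i IH]; first by rewrite expg0 perm1.
by rewrite expgSr permM; apply: cA.
Qed.

Lemma closed_orbit A y : closed A -> y \in A -> porbit g y \subset A.
Proof.
move=> cA yA; apply/subsetP => z /porbitP [i ->]; exact: closed_iter.
Qed.

Lemma porbit_in x y : y \in porbit g x -> porbit g y = porbit g x.
Proof. by move=> h; apply/eqP; rewrite eq_porbit_mem. Qed.

Lemma g_out_orbit x y : y \notin porbit g x -> g y \notin porbit g x.
Proof.
apply: contra => h; have := porbit_in h.
have -> : g y = (g ^+ 1)%g y by rewrite expg1.
by rewrite porbit_perm => <-; apply: porbit_id.
Qed.

Lemma CS0 k : #|CS set0 k| <= (k == 0).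
Proof.
have sub : CS set0 k \subset [set set0].
  apply/subsetP => A; rewrite !inE => /andP [/andP [hA _] _].
  by rewrite subset0 in hA.
case: k sub => [|k] sub.
  by apply: leq_trans (subset_leq_card sub) _; rewrite cards1.
rewrite leqn0 cards_eq0; apply/eqP/setP => A; rewrite !inE.
apply/negbTE; apply/negP => /andP [/andP [hA _] hk].
by rewrite subset0 in hA; move/eqP: hA => hA; subst A; rewrite cards0 in hk.
Qed.

Lemma P2 (D : {set T}) : closed D -> (forall x, x \in D -> g x != x) ->
  exists ps, [/\ all (leq 2) ps, sumn ps = #|D| & forall k, #|CS D k| <= cnt ps k].
Proof.
move: {2}#|D| (leqnn #|D|) => N; elim: N D => [|N IH] D hN cD fD.
  move: hN; rewrite leqn0 cards_eq0 => /eqP hD.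
  by exists [::]; split => //=; rewrite hD ?cards0 // => k; exact: CS0.
have [hD|[x xD]] := set_0Vmem D.
  by exists [::]; split => //=; rewrite hD ?cards0 // => k; exact: CS0.
set C := porbit g x.
have CD : C \subset D by apply: closed_orbit.
have xC : x \in C by apply: porbit_id.
have gxC : g x \in C.
  by have := mem_porbit g 1 x; rewrite expg1.
have C2 : 2 <= #|C|.
  have : [set x; g x] \subset C by apply/subsetP => z; rewrite !inE => /orP [] /eqP ->.
  move/subset_leq_card; rewrite cards2 eq_sym (fD x xD); done.
set D' := D :\: C.
have cardD' : #|D'| = #|D| - #|C|.
  by rewrite cardsD (setIidPr CD).
have cD' : closed D'.
  apply/forall_inP => y; rewrite !inE => /andP [yC yD].
  rewrite (g_out_orbit yC) /=.
  by move/forall_inP: cD; apply.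
have fD' : forall y, y \in D' -> g y != y.
  by move=> y; rewrite inE => /andP [_ /fD].
have : #|D'| <= N.
  rewrite cardD'; move: hN C2; lia.
case/(IH D')/(_ cD' fD') => ps [h2 hs hc].
exists (#|C| :: ps); split => /=; first by rewrite C2.
  rewrite hs cardD'; have := subset_leq_card CD; lia.
move=> k.
set Q := [set A : {set T} | C \subset A].
rewrite -(cardsID Q (CS D k)) /= [X in _ <= X]addnC; apply: leq_add.
  case: ifP => hk.
    apply: leq_trans (hc (k - #|C|)).
    rewrite -(@card_in_imset _ _ (fun A => A :\: C) (CS D k :&: Q)); last first.
      move=> A B; rewrite !inE => /andP [_ hA] /andP [_ hB] hAB.
      apply/setP => y; have [yC|yC] := boolP (y \in C).
        by rewrite (subsetP hA y yC) (subsetP hB y yC).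
      by move/setP/(_ y): hAB; rewrite !inE yC.
    apply: subset_leq_card; apply/subsetP => B /imsetP [A].
    rewrite !inE => /andP [/andP [/andP [AD cA] /eqP kA] CA] ->.
    rewrite (setSD _ AD) /=; apply/andP; split.
      apply/forall_inP => y; rewrite !inE => /andP [yC yA].
      rewrite (g_out_orbit yC) /=.
      by move/forall_inP: cA; apply.
    by rewrite cardsD (setIidPr CA) kA.
  rewrite leqn0 cards_eq0; apply/eqP/setP => A; rewrite !inE.
  apply/negbTE; apply/negP => /andP [/andP [/andP [_ _] /eqP kA] CA].
  by have := subset_leq_card CA; rewrite kA hk.
apply: leq_trans (hc k); apply: subset_leq_card; apply/subsetP => A.
rewrite !inE => /andP [CA /andP [/andP [AD cA] kA]]; rewrite cA kA !andbT.
apply/subsetP => y yA; rewrite inE (subsetP AD y yA) andbT.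
apply/negP => yC; move/negP: CA; apply.
have : porbit g y \subset A by apply: closed_orbit.
by rewrite /C (porbit_in yC).
Qed.

End Closed.


Lemma KL n r (p q s : {perm 'I_n}) :
  2 * r <= #|[set i | p i != q i]| -> s \in hball r p :&: hball r q ->
  [/\ #|[set i | p i != q i]| = 2 * r, #|[set i | p i != s i]| = r
    & forall i, p i != s i -> s i = q i].
Proof.
move=> hD; rewrite !inE /hdist => /andP [hp hq].
set A := [set i | p i != s i] in hp *.
set B := [set i | q i != s i] in hq.
have sub : [set i | p i != q i] \subset A :|: B.
  apply/subsetP => i; rewrite !inE; apply: contraR; rewrite negb_or !negbK.
  by move=> /andP [/eqP -> /eqP ->].
have := subset_leq_card sub; rewrite cardsU => hU.
have hI : #|A :&: B| <= #|A| by apply: subset_leq_card; apply: subsetIl.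
have hAB : #|A :&: B| = 0 by move: hU hD hp hq hI; lia.
split; [by move: hU hD hp hq hAB; lia | by move: hU hD hp hq hAB; lia |].
move=> i hi; move/eqP: hAB; rewrite cards_eq0 => /eqP /setP /(_ i).
rewrite !inE hi /= => /negbT; rewrite negbK => /eqP //.
Qed.

Lemma UB n r t (p q : {perm 'I_n}) : 2 * r <= hdist p q ->
  (r = 2 * t \/ r = 2 * t + 1) -> 1 <= t ->
  #|hball r p :&: hball r q| <=
    (if r == 2 * t then 'C(2 * t, t) else 2 * 'C(2 * t - 2, t - 1)).
Proof.
rewrite /hdist => hD hr ht.
set D := [set i | p i != q i] in hD *.
set g := (q * p^-1)%g.
have gE : forall i, g i = (p^-1)%g (q i) by move=> i; rewrite /g permM.
have Dg : forall i, (i \in D) = (g i != i).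
  move=> i; rewrite inE gE; congr negb; apply/eqP/eqP => h.
    by rewrite -h permK.
  by rewrite -{1}h permKV.
have [-> | [s0 hs0]] := set_0Vmem (hball r p :&: hball r q); first by rewrite cards0.
have [D2 _ _] := KL hD hs0.
have cD : closed g D.
  apply/forall_inP => i; rewrite !Dg; apply: contra => /eqP h.
  by apply/eqP; apply: (@perm_inj _ g).
have fD : forall x, x \in D -> g x != x by move=> x; rewrite Dg.
have [ps [h2 hs hc]] := P2 cD fD.
have hV := cnt_V h2 (etrans hs D2) hr ht.
apply: (leq_trans _ hV); apply: (leq_trans _ (hc r)).
rewrite -(@card_in_imset _ _ (fun s : {perm 'I_n} => [set i | p i != s i]) (hball r p :&: hball r q)); last first.
  move=> s1 s2 h1 h2' e; apply/permP => i.
  have [_ _ k1] := KL hD h1; have [_ _ k2] := KL hD h2'.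
  move/setP/(_ i): e; rewrite !inE.
  case: (eqVneq (p i) (s1 i)) => [e1|n1]; case: (eqVneq (p i) (s2 i)) => [e2|n2] //= _.
    by rewrite -e1 -e2.
  by rewrite k1 ?n1 // k2 ?n2.
apply: subset_leq_card; apply/subsetP => X /imsetP [s hs1 ->].
have [_ c1 k1] := KL hD hs1.
rewrite inE c1 eqxx andbT; apply/andP; split.
  apply/subsetP => i; rewrite !inE => hi; rewrite -(k1 i hi); done.
apply/forall_inP => i; rewrite !inE => hi.
apply/negP => /eqP e.
have pg : p (g i) = q i by rewrite gE permKV.
have ei : g i = i by apply: (@perm_inj _ s); rewrite -e pg (k1 i hi).
have iD : i \in D by rewrite inE -(k1 i hi).
by move: (fD i iD); rewrite ei eqxx.
Qed.


Lemma LBgen n r (g : {perm 'I_n}) (Fam : {set {set 'I_n}}) :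
  #|[set i | g i != i]| = 2 * r ->
  (forall A, A \in Fam -> [/\ A \subset [set i | g i != i], closed g A & #|A| = r]) ->
  #|Fam| <= #|hball r 1 :&: hball r g|.
Proof.
move=> hD hF.
apply: leq_trans (leq_imset_card (fun s : {perm 'I_n} => [set i | s i != i]) _).
apply: subset_leq_card; apply/subsetP => A AF.
have [AD cA kA] := hF A AF.
have inj : injective (fun x => if x \in A then g x else x).
  apply: perm_in_inj; first by move=> x y _ _; apply: perm_inj.
  apply/subsetP => y /imsetP [x xA ->]; by move/forall_inP: cA; apply.
set s := perm inj.
have sE : forall i, s i = if i \in A then g i else i by move=> i; rewrite permE.
have eA : [set i | s i != i] = A.
  apply/setP => i; rewrite inE sE; case: ifP => hi; last by rewrite eqxx.
  by have := subsetP AD i hi; rewrite inE.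
apply/imsetP; exists s; last by rewrite eA.
rewrite !inE /hdist; apply/andP; split.
  have -> : [set i | (1%g : {perm 'I_n}) i != s i] = A.
    by rewrite -eA; apply/setP => i; rewrite !inE perm1 eq_sym.
  by rewrite kA.
have -> : [set i | g i != s i] = [set i | g i != i] :\: A.
  apply/setP => i; rewrite !inE sE; case: ifP => hi /=; first by rewrite eqxx.
  done.
rewrite cardsD (setIidPr AD); lia.
Qed.

Lemma Nval_ge n r (g : {perm 'I_n}) : 2 * r <= hdist 1 g ->
  #|hball r 1 :&: hball r g| <= Nval n (2 * r) r.
Proof.
move=> h; rewrite /Nval.
by apply: (@leq_bigmax_cond _ (fun pq : {perm 'I_n} * {perm 'I_n} => 2 * r <= hdist pq.1 pq.2) (fun pq => #|hball r pq.1 :&: hball r pq.2|) (1%g, g)).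
Qed.


Ltac ifs := repeat match goal with |- context [if ?b then _ else _] => case: (boolP b) => ? end.

Section Concrete.
Variables n' c r p : nat.
Hypotheses (hn : 2 * r <= n'.+1) (hc : ~~ odd c) (hcp : 3 * c + 2 * p = 2 * r).

Definition gn (i : nat) :=
  if i < 3 * c then (if i %% 3 == 2 then i - 2 else i.+1)
  else if i < 2 * r then (if odd i then i.-1 else i.+1) else i.

Lemma gn_lt i : i < n'.+1 -> gn i < n'.+1.
Proof. rewrite /gn; ifs; lia. Qed.

Definition gO (i : 'I_n'.+1) : 'I_n'.+1 := inord (gn i).

Lemma gO_val i : (gO i : nat) = gn i.
Proof. by rewrite /gO inordK // gn_lt. Qed.

Lemma gO_inj : injective gO.
Proof.
move=> i j /(congr1 (@nat_of_ord _)); rewrite !gO_val => h; apply/val_inj => /=.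
have hi := ltn_ord i; have hj := ltn_ord j.
move: h; rewrite /gn; ifs; lia.
Qed.

Definition gp : {perm 'I_n'.+1} := perm gO_inj.

Lemma gp_val i : (gp i : nat) = gn i.
Proof. by rewrite permE gO_val. Qed.

Lemma Dg : [set i | gp i != i] = [set i : 'I_n'.+1 | (i : nat) < 2 * r].
Proof.
apply/setP => i; rewrite !inE -(inj_eq (@ord_inj _)) gp_val /gn.
have hi := ltn_ord i.
ifs; apply/idP/idP; lia.
Qed.

Lemma Dg_card : #|[set i | gp i != i]| = 2 * r.
Proof.
rewrite Dg.
have -> : [set i : 'I_n'.+1 | (i : nat) < 2 * r] = [set inord (k : nat) | k : 'I_(2 * r)].
  apply/setP => i; rewrite inE; apply/idP/imsetP.
    move=> hi; exists (Ordinal hi) => //=; by rewrite inord_val.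
  by case=> k _ ->; rewrite inordK //; apply: leq_trans (ltn_ord k) hn.
rewrite card_imset ?card_ord //.
move=> k1 k2 /(congr1 (@nat_of_ord _)); rewrite !inordK => [h||]; first exact: val_inj.
  by apply: leq_trans (ltn_ord k2) hn.
by apply: leq_trans (ltn_ord k1) hn.
Qed.

Definition lo (j : 'I_p) : 'I_n'.+1 := inord (3 * c + 2 * j).
Definition hi (j : 'I_p) : 'I_n'.+1 := inord ((3 * c + 2 * j).+1).

Lemma lo_val j : (lo j : nat) = 3 * c + 2 * j.
Proof. by rewrite /lo inordK //; have := ltn_ord j; lia. Qed.
Lemma hi_val j : (hi j : nat) = (3 * c + 2 * j).+1.
Proof. by rewrite /hi inordK //; have := ltn_ord j; lia. Qed.

Lemma lo_inj : injective lo.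
Proof. by move=> j1 j2 /(congr1 (@nat_of_ord _)); rewrite !lo_val => h; apply: val_inj => /=; lia. Qed.
Lemma hi_inj : injective hi.
Proof. by move=> j1 j2 /(congr1 (@nat_of_ord _)); rewrite !hi_val => h; apply: val_inj => /=; lia. Qed.

Definition Aset (J : {set 'I_p}) := [set lo j | j in J] :|: [set hi j | j in J].

Lemma Aset_card J : #|Aset J| = 2 * #|J|.
Proof.
rewrite /Aset cardsU (card_imset _ lo_inj) (card_imset _ hi_inj).
suff -> : #|[set lo j | j in J] :&: [set hi j | j in J]| = 0 by rewrite subn0 mul2n addnn.
apply/eqP; rewrite cards_eq0; apply/eqP/setP => x; rewrite !inE.
apply/negbTE; apply/negP => /andP [/imsetP [j1 _ ->] /imsetP [j2 _]].
by move/(congr1 (@nat_of_ord _)); rewrite lo_val hi_val; lia.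
Qed.

Lemma Aset_sub J : Aset J \subset [set i | gp i != i].
Proof.
rewrite Dg; apply/subsetP => x; rewrite !inE => /orP [] /imsetP [j _ ->].
  by rewrite lo_val; have := ltn_ord j; lia.
by rewrite hi_val; have := ltn_ord j; lia.
Qed.

Lemma Aset_closed J : closed gp (Aset J).
Proof.
apply/forall_inP => x; rewrite !inE => /orP [] /imsetP [j jJ ->].
  apply/orP; right; apply/imsetP; exists j => //; apply: val_inj.
  rewrite /= gp_val lo_val hi_val /gn; have := ltn_ord j; ifs; lia.
apply/orP; left; apply/imsetP; exists j => //; apply: val_inj.
rewrite /= gp_val lo_val hi_val /gn; have := ltn_ord j; ifs; lia.
Qed.

Lemma lo_mem j J : (lo j \in Aset J) = (j \in J).
Proof.
rewrite /Aset inE mem_imset; last exact: lo_inj.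
case: (j \in J) => //=; apply/negbTE/negP => /imsetP [j2 _].
by move/(congr1 (@nat_of_ord _)); rewrite lo_val hi_val; lia.
Qed.

Lemma Aset_inj : injective Aset.
Proof.
move=> J1 J2 e; apply/setP => j; by rewrite -!lo_mem e.
Qed.

Definition tr (k : nat) (m : 'I_3) : 'I_n'.+1 := inord (3 * k + m).
Definition Tset k := [set tr k m | m : 'I_3].

Variable k : nat.
Hypothesis hk : k < c.

Lemma tr_val m : (tr k m : nat) = 3 * k + m.
Proof. by rewrite /tr inordK //; have := ltn_ord m; lia. Qed.

Lemma Tset_card : #|Tset k| = 3.
Proof.
rewrite card_imset ?card_ord //.
by move=> m1 m2 /(congr1 (@nat_of_ord _)); rewrite !tr_val => h; apply: val_inj => /=; lia.
Qed.

Lemma Tset_sub : Tset k \subset [set i | gp i != i].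
Proof.
rewrite Dg; apply/subsetP => x /imsetP [m _ ->]; rewrite inE tr_val.
by have := ltn_ord m; lia.
Qed.

Lemma Tset_closed : closed gp (Tset k).
Proof.
apply/forall_inP => x /imsetP [m _ ->].
have hm := ltn_ord m.
have hm' : (if (m : nat) == 2 then 0 else (m : nat).+1) < 3 by case: ifP; lia.
apply/imsetP; exists (Ordinal hm') => //; apply: val_inj.
rewrite /= gp_val tr_val tr_val /= /gn; ifs; lia.
Qed.

Lemma Tset_A J : [disjoint Tset k & Aset J].
Proof.
rewrite -setI_eq0; apply/eqP/setP => x; rewrite !inE.
apply/negbTE/negP => /andP [/imsetP [m _ ->]] /orP [] /imsetP [j _].
  by move/(congr1 (@nat_of_ord _)); rewrite tr_val lo_val; have := ltn_ord m; lia.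
by move/(congr1 (@nat_of_ord _)); rewrite tr_val hi_val; have := ltn_ord m; lia.
Qed.

Lemma lo_T j : lo j \notin Tset k.
Proof.
by apply/negP => /imsetP [m _] /(congr1 (@nat_of_ord _)); rewrite tr_val lo_val; have := ltn_ord m; lia.
Qed.

End Concrete.


Lemma closedU (T : finType) (g : {perm T}) A B :
  closed g A -> closed g B -> closed g (A :|: B).
Proof.
move=> /forall_inP cA /forall_inP cB; apply/forall_inP => x; rewrite !inE.
by case/orP => h; [rewrite cA | rewrite cB ?orbT].
Qed.

Lemma cardsU_disj (T : finType) (A B : {set T}) :
  [disjoint A & B] -> #|A :|: B| = #|A| + #|B|.
Proof.
rewrite -setI_eq0 => /eqP h; rewrite cardsU h cards0 subn0 //.
Qed.

Lemma hdist1 n (g : {perm 'I_n}) : hdist 1 g = #|[set i | g i != i]|.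
Proof. by rewrite /hdist; apply: eq_card => i; rewrite !inE perm1 eq_sym. Qed.

Theorem theorem1 (t r n : nat) :
  2 <= t -> (r = 2 * t \/ r = 2 * t + 1) -> 2 * r <= n ->
  Nval n (2 * r) r =
    (if r == 2 * t then 'C(2 * t, t) else 2 * 'C(2 * t - 2, t - 1)).
Proof.
move=> ht hr hn.
apply/eqP; rewrite eqn_leq; apply/andP; split.
  apply/bigmax_leqP => pq hpq; apply: UB hpq hr _; lia.
case: n hn => [|n'] hn; first by lia.
case: hr => hr.
  have hc : ~~ odd 0 by [].
  have hcp : 3 * 0 + 2 * r = 2 * r by lia.
  set g := gp hn hc hcp.
  apply: (leq_trans _ (Nval_ge (g := g) _)); last by rewrite hdist1 Dg_card.
  set Fam := [set Aset n' 0 J | J in [set J : {set 'I_r} | #|J| == t]].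
  apply: (leq_trans _ (LBgen (Fam := Fam) (Dg_card hn hc hcp) _)); last first.
    move=> A /imsetP [J]; rewrite inE => /eqP hJ ->; split.
    - exact: Aset_sub.
    - exact: Aset_closed.
    - by rewrite (Aset_card hn hc hcp) hJ; lia.
  rewrite ifT; last by apply/eqP.
  rewrite /Fam card_imset; last exact: (Aset_inj hn hc hcp).
  by rewrite card_draws card_ord -hr.
have hc : ~~ odd 2 by [].
have hcp : 3 * 2 + 2 * (2 * t - 2) = 2 * r by lia.
set g := gp hn hc hcp.
apply: (leq_trans _ (Nval_ge (g := g) _)); last by rewrite hdist1 Dg_card.
set S := [set J : {set 'I_(2 * t - 2)} | #|J| == t - 1].
set F0 := [set Tset n' 0 :|: Aset n' 2 J | J in S].
set F1 := [set Tset n' 1 :|: Aset n' 2 J | J in S].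
have h0 : 0 < 2 by []. have h1 : 1 < 2 by [].
have prop : forall k, k < 2 -> forall J : {set 'I_(2 * t - 2)}, J \in S ->
    [/\ Tset n' k :|: Aset n' 2 J \subset [set i | g i != i],
        closed g (Tset n' k :|: Aset n' 2 J) & #|Tset n' k :|: Aset n' 2 J| = r].
  move=> k hk J; rewrite inE => /eqP hJ; split.
  - by rewrite subUset (Tset_sub hn hc hcp hk) Aset_sub.
  - by apply: closedU; [exact: Tset_closed | exact: Aset_closed].
  - rewrite cardsU_disj ?(Tset_A hn hc hcp hk) //.
    by rewrite (Tset_card hn hc hcp hk) (Aset_card hn hc hcp) hJ; lia.
have injk : forall k, k < 2 -> injective (fun J : {set 'I_(2 * t - 2)} => Tset n' k :|: Aset n' 2 J).
  move=> k hk J1 J2 e; apply/setP => j.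
  move/setP/(_ (lo n' 2 j)): e.
  by rewrite in_setU [in X in _ = X]in_setU (negbTE (lo_T hn hc hcp hk j)) /= !(lo_mem hn hc hcp).
have x0 : tr n' 0 ord0 \in Tset n' 0 by apply: imset_f.
have dis : [disjoint F0 & F1].
  rewrite -setI_eq0; apply/eqP/setP => X; rewrite !inE.
  apply/negbTE/negP => /andP [/imsetP [J1 _ ->] /imsetP [J2 _ e]].
  move/setP/(_ (tr n' 0 ord0)): e; rewrite in_setU x0 /= in_setU.
  have -> : (tr n' 0 ord0 \in Aset n' 2 J2) = false.
    apply/negbTE; apply/negP => hA.
    by have := Tset_A hn hc hcp h0 J2; rewrite disjoint_sym => /disjointFr /(_ hA); rewrite x0.
  rewrite orbF => /esym /imsetP [m _] /(congr1 (@nat_of_ord _)).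
  by rewrite (tr_val hn hc hcp h0) (tr_val hn hc hcp h1) /=; lia.
apply: (leq_trans _ (LBgen (Fam := F0 :|: F1) (Dg_card hn hc hcp) _)); last first.
  move=> A; rewrite inE => /orP [] /imsetP [J JS ->]; [exact: prop | exact: prop].
rewrite ifF; last by lia.
rewrite cardsU_disj // /F0 /F1 !card_imset; [|exact: injk|exact: injk].
rewrite /S card_draws card_ord.
have -> : 2 * t - 2 = 2 * (t - 1) by lia.
by rewrite mul2n addnn.
Qed.
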